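(* Let $p$ be a prime, let $R$ be a GWNC ring with $p\in{\rm Nil}(R)$, and let $G$ be a locally finite $p$-group. Then the group ring $RG$ is GWNC.
   Context: All rings are associative with identity. For a ring $S$, $U(S)$, ${\rm Nil}(S)$, ${\rm Id}(S)$ denote units, nilpotents, idempotents. $S$ is GWNC if every $a\in S\setminus U(S)$ can be written as $a=q+e$ or $a=q-e$ with $q\in{\rm Nil}(S)$, $e\in{\rm Id}(S)$. A group is a $p$-group if the order of each element is a power of $p$; it is locally finite if every finitely generated subgroup is finite. *)

(* Defs.v *)
From HB Require Import structures.
From mathcomp Require Import all_boot all_order all_algebra.
Set Implicit Arguments. Unset Strict Implicit. Unset Printing Implicit Defensive.
Import GRing.Theory.
Local Open Scope ring_scope.

Definition is_unit_r (S : pzRingType) (a : S) : Prop :=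
  exists b : S, a * b = 1 /\ b * a = 1.
Definition is_nil_r (S : pzRingType) (a : S) : Prop := exists n : nat, a ^+ n = 0.
Definition is_idem_r (S : pzRingType) (e : S) : Prop := e * e = e.

Definition GWNC (S : pzRingType) : Prop :=
  forall a : S, ~ is_unit_r a ->
    exists q e : S, is_nil_r q /\ is_idem_r e /\ (a = q + e \/ a = q - e).

Definition elt_order (G : groupType) (x : G) (n : nat) : Prop :=
  (0 < n)%N /\ natexp x n = monoid.one /\
  forall m : nat, (0 < m)%N -> natexp x m = monoid.one -> (n <= m)%N.

Definition is_p_group (p : nat) (G : groupType) : Prop :=
  forall x : G, exists k : nat, elt_order x (p ^ k).

Inductive gen_by (G : groupType) (s : seq G) : G -> Prop :=
  | gen_one : gen_by s monoid.one
  | gen_in  : forall x, x \in s -> gen_by s x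
  | gen_mul : forall x y, gen_by s x -> gen_by s y -> gen_by s (monoid.mul x y)
  | gen_inv : forall x, gen_by s x -> gen_by s (monoid.inv x).

Definition locally_finite (G : groupType) : Prop :=
  forall s : seq G, exists t : seq G, forall x, gen_by s x -> x \in t.

(* ---------- the group ring RG ----------
   Elements of RG are represented by finite formal sums  sum_i r_i g_i ,
   i.e. lists of pairs (r_i, g_i); two representatives denote the same
   element of RG iff they have the same coefficient at every g in G. *)
Section GroupRing.
Variables (R : pzRingType) (G : groupType).

Definition grp := seq (R * G).

Definition gr_coef (a : grp) (x : G) : R := \sum_(u <- a | u.2 == x) u.1.
Definition gr_eq (a b : grp) : Prop := forall x : G, gr_coef a x = gr_coef b x.

Definition gr_zero : grp := [::].
Definition gr_one : grp := [:: (1, monoid.one)].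
Definition gr_add (a b : grp) : grp := a ++ b.
Definition gr_opp (a : grp) : grp := [seq (- u.1, u.2) | u <- a].
Definition gr_sub (a b : grp) : grp := gr_add a (gr_opp b).
Definition gr_mul (a b : grp) : grp :=
  [seq (u.1 * v.1, monoid.mul u.2 v.2) | u <- a, v <- b].
Fixpoint gr_exp (a : grp) (n : nat) : grp :=
  if n is n'.+1 then gr_mul a (gr_exp a n') else gr_one.

Definition gr_unit (a : grp) : Prop :=
  exists b : grp, gr_eq (gr_mul a b) gr_one /\ gr_eq (gr_mul b a) gr_one.
Definition gr_nil (a : grp) : Prop := exists n : nat, gr_eq (gr_exp a n) gr_zero.
Definition gr_idem (e : grp) : Prop := gr_eq (gr_mul e e) e.

Definition GWNC_group_ring : Prop :=
  forall a : grp, ~ gr_unit a ->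
    exists q e : grp, gr_nil q /\ gr_idem e /\
      (gr_eq a (gr_add q e) \/ gr_eq a (gr_sub q e)).
End GroupRing.

(* Main.v *)
Require Import Defs.
From HB Require Import structures.
From Stdlib Require Import Classical IndefiniteDescription.
From mathcomp Require Import all_boot all_order all_algebra all_fingroup all_solvable all_character.
From mathcomp Require Import zify.
Set Implicit Arguments. Unset Strict Implicit. Unset Printing Implicit Defensive.
Import GRing.Theory.
Local Open Scope ring_scope.
Section Unip.
Variables (p : nat) (hp : prime p) (gT : finGroupType) (G : {group gT}).
Hypothesis pG : (p.-group G)%g.

Lemma rfix_nz n' (rG : mx_representation 'F_p G n'.+1) : (0 < \rank (rfix_mx rG G))%N.
Proof.
have acts : [acts G, on setT | 'MR rG].
  by apply/subsetP=> x Gx; rewrite !inE Gx /=; apply/subsetP=> u _; rewrite !inE.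
have := pgroup_fix_mod pG acts.
rewrite setTI afix_repr // card_rowg cardsT card_mx card_Fp // mul1n.
case: (\rank _) => // /eqP.
by rewrite expnS modnMr expn0 modn_small ?prime_gt1.
Qed.

Lemma factmod_prod n (rG : mx_representation 'F_p G n) U (Umod : mxmodule rG U)
  (w : seq gT) : all (fun x => x \in G) w -> forall m (A : 'M_(m, n)),
  in_factmod U (A *m \prod_(x <- w) (rG x - 1)) =
  in_factmod U A *m \prod_(x <- w) (factmod_repr Umod x - 1).
Proof.
elim: w => [|y w IH] /=; first by move=> _ m A; rewrite !big_nil !mulmx1.
case/andP=> Gy Gw m A; rewrite !big_cons -!mulmxE !mulmxA IH //.
by rewrite !mulmxBr !mulmx1 linearB /= in_factmodJ.
Qed.

Lemma unip n (rG : mx_representation 'F_p G n) (w : seq gT) :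
  all (fun x => x \in G) w -> (n <= size w)%N -> \prod_(x <- w) (rG x - 1) = 0.
Proof.
elim: n.+1 {-2}n (ltnSn n) rG w => // N IHN [|n'] ltn rG w Gw sw.
  exact: flatmx0.
set U := rfix_mx rG G.
have Umod : mxmodule rG U := rfix_mx_module rG.
set k := \rank (cokermx U).
have ltk : (k < n'.+1)%N.
  by rewrite /k mxrank_coker -subn_gt0 subKn ?rank_leq_col // rfix_nz.
rewrite -(cat_take_drop k w) big_cat /=.
have sd : (0 < size (drop k w))%N by rewrite size_drop subn_gt0 (leq_trans ltk).
case Ed: (drop k w) sd => [|x w2] // _.
have Gt : all (fun x => x \in G) (take k w) by rewrite -(cat_take_drop k w) all_cat in Gw; case/andP: Gw.
have Gx : x \in G by rewrite -(cat_take_drop k w) all_cat Ed /= in Gw; case/and3P: Gw.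
have P0 : \prod_(x <- take k w) (factmod_repr Umod x - 1) = 0.
  apply: (IHN k _ (factmod_repr Umod)) => //.
    exact: leq_trans ltk ltn.
  by rewrite size_takel // ltnW // (leq_trans ltk sw).
have sub : (\prod_(x <- take k w) (rG x - 1) <= U)%MS.
  rewrite -in_factmod_eq0 -[X in in_factmod U X]mul1mx factmod_prod // P0.
  by rewrite mulmx0.
rewrite big_cons mulrA -mulmxE mulmxBr mulmx1.
by move/rfix_mxP: sub => -> //; rewrite subrr mul0mx.
Qed.
End Unip.

Definition mkperm m (f : 'I_m -> 'I_m) : {perm 'I_m} :=
  if injectiveb f =P true is ReflectT h then perm (elimT (injectiveP f) h) else 1%g.
Lemma mkpermE m (f : 'I_m -> 'I_m) : injective f -> mkperm f =1 f.
Proof.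
move=> fi; rewrite /mkperm; case: eqP => [h|nh]; first by move=> x; rewrite permE.
by case: nh; apply/injectiveP.
Qed.

Section Perm.
Variables (G : groupType) (s : seq G).
Hypotheses (us : uniq s) (s1 : monoid.one \in s)
  (smul : forall x y, x \in s -> y \in s -> monoid.mul x y \in s).

Definition mu (g : G) (i : 'I_(size s)) : 'I_(size s) :=
  insubd i (index (monoid.mul (nth monoid.one s i) g) s).

Lemma mu_val g i : g \in s -> val (mu g i) = index (monoid.mul (nth monoid.one s i) g) s.
Proof. by move=> gs; rewrite /mu val_insubd index_mem smul ?mem_nth. Qed.

Lemma mu_nth g i : g \in s -> nth monoid.one s (mu g i) = monoid.mul (nth monoid.one s i) g.
Proof. by move=> gs; rewrite mu_val // nth_index // smul ?mem_nth. Qed.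

Lemma mu_inj g : g \in s -> injective (mu g).
Proof.
move=> gs i j /(congr1 (nth monoid.one s \o val)) /=; rewrite !mu_nth //.
move/monoid.mulIg => /eqP; rewrite nth_uniq // => /eqP; exact: val_inj.
Qed.

Definition pi g := mkperm (mu g).

Lemma piE g i : g \in s -> pi g i = mu g i.
Proof. by move=> gs; rewrite /pi mkpermE //; apply: mu_inj. Qed.

Lemma pi_mul x y : x \in s -> y \in s -> pi (monoid.mul x y) = (pi x * pi y)%g.
Proof.
move=> xs ys; apply/permP => i; rewrite permM !piE ?smul //; apply: val_inj.
by rewrite [RHS]mu_val // mu_nth // mu_val ?smul // monoid.mulgA.
Qed.

Lemma pi_one : pi monoid.one = 1%g.
Proof.
apply/permP => i; rewrite perm1 piE //; apply: val_inj.
by rewrite mu_val // monoid.mulg1 index_uniq.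
Qed.

Lemma natexp_s g m : g \in s -> natexp g m \in s.
Proof. by move=> gs; elim: m => [|m IH] //; rewrite monoid.expgS smul. Qed.

Lemma pi_exp g m : g \in s -> pi (natexp g m) = (pi g ^+ m)%g.
Proof.
move=> gs; elim: m => [|m IH]; first exact: pi_one.
by rewrite monoid.expgS pi_mul ?natexp_s // IH expgS.
Qed.

Definition Kset := [set x | x \in map pi s].

Lemma Kset_group : group_set Kset.
Proof.
apply/group_setP; split; first by rewrite inE -pi_one map_f.
move=> x y; rewrite !inE => /mapP [a as_ ->] /mapP [b bs ->].
by rewrite -pi_mul // map_f // smul.
Qed.

Definition K := Group Kset_group.

Variable p : nat.
Hypothesis hp : prime p.
Hypothesis hpow : forall g, g \in s -> exists k, natexp g (p ^ k) = monoid.one.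

Lemma pK : (p.-group K)%g.
Proof.
apply/pgroupP => q qp qd.
have [x xK ox] := Cauchy qp qd.
move: xK ox; rewrite inE => /mapP [g gs ->] ox.
have [k hk] := hpow gs.
have : (#[pi g]%g %| p ^ k)%N by rewrite order_dvdn -pi_exp // hk pi_one.
rewrite ox Euclid_dvdX // => /andP [qdp _].
by rewrite inE; rewrite (dvdn_prime2 qp hp) in qdp.
Qed.

Lemma map_Pi (R : pzRingType) (w : seq G) :
  map_mx (intr : int -> R) (\prod_(g <- w) (perm_mx (pi g) - 1 : 'M[int]_(size s)))
  = \prod_(g <- w) (perm_mx (pi g) - 1).
Proof.
elim: w => [|g w IH]; first by rewrite !big_nil map_mx1.
by rewrite !big_cons -!mulmxE map_mxM IH map_mxB map_mx1 map_perm_mx.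
Qed.

Lemma Fp_prod (w : seq G) : all (fun g => g \in s) w -> (size s <= size w)%N ->
  \prod_(g <- w) (perm_mx (pi g) - 1 : 'M['F_p]_(size s)) = 0.
Proof.
move=> ws sw.
have rK : mx_repr K (fun x : {perm 'I_(size s)} => perm_mx x : 'M['F_p]_(size s)).
  by split; [exact: perm_mx1 | move=> x y _ _; exact: perm_mxM].
have := unip hp pK (MxRepresentation rK) (w := map pi w).
rewrite big_map; apply; last by rewrite size_map.
by rewrite all_map; apply/allP => g gw /=; rewrite inE map_f //; apply: (allP ws).
Qed.

Lemma Z_prod_div k (w : seq G) : all (fun g => g \in s) w -> (size s * k <= size w)%N ->
  forall i j, ((p ^ k)%:Z %| (\prod_(g <- w) (perm_mx (pi g) - 1 : 'M[int]_(size s))) i j)%Z.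
Proof.
elim: k w => [|k IH] w ws sw i j; first by rewrite expn0 dvd1z.
rewrite -(cat_take_drop (size s) w) big_cat /= -mulmxE mxE.
apply: rpred_sum => l _.
rewrite expnS PoszM; apply: dvdz_mul.
  have wt : all (fun g => g \in s) (take (size s) w).
    by move: ws; rewrite -{1}(cat_take_drop (size s) w) all_cat => /andP [].
  have st : (size s <= size (take (size s) w))%N.
    by rewrite size_takel // (leq_trans _ sw) // leq_pmulr.
  have h0 := Fp_prod wt st.
  have := congr1 (fun M : 'M['F_p]_(size s) => M i l) (map_Pi 'F_p (take (size s) w)).
  rewrite h0 ?mxE => E.
  by rewrite (dvdz_pcharf (pchar_Fp hp)) E.
apply: IH; first by move: ws; rewrite -{1}(cat_take_drop (size s) w) all_cat => /andP [].
by rewrite size_drop; move: sw; rewrite mulnS; lia.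
Qed.

Section RLevel.
Variable R : pzRingType.
Variable kp : nat.
Hypothesis hk : (p%:R : R) ^+ kp = 0.

Definition PiR (w : seq G) : 'M[R]_(size s) := \prod_(g <- w) (perm_mx (pi g) - 1).

Lemma PiR_zero w : all (fun g => g \in s) w -> (size s * kp <= size w)%N -> PiR w = 0.
Proof.
move=> ws sw; apply/matrixP => i j; rewrite /PiR -map_Pi mxE.
have /dvdzP [c ->] := Z_prod_div ws sw i j.
by rewrite intrM /= -[X in _ * X]/((p ^ kp)%:R) natrX hk mulr0 mxE.
Qed.

Lemma PiR_cent w i j (r : R) : PiR w i j * r = r * PiR w i j.
Proof. by rewrite /PiR -map_Pi mxE mulrzl mulrzr. Qed.

Lemma perm_cent (q : {perm 'I_(size s)}) i j (r : R) :
  (perm_mx q : 'M[R]_(size s)) i j * r = r * (perm_mx q : 'M[R]_(size s)) i j.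
Proof.
by rewrite -(map_perm_mx (intr : {rmorphism int -> R})) mxE mulrzl mulrzr.
Qed.

Lemma scal_mul (A B : 'M[R]_(size s)) (a b : R) :
  (forall i j r, A i j * r = r * A i j) ->
  (a *: A) *m (b *: B) = (a * b) *: (A *m B).
Proof.
move=> cA; apply/matrixP => i j; rewrite !mxE mulr_sumr; apply: eq_bigr => l _.
by rewrite !mxE mulrA -(mulrA a) cA !mulrA.
Qed.

Lemma PiR_cat w1 w2 : PiR (w1 ++ w2) = PiR w1 *m PiR w2.
Proof. by rewrite /PiR big_cat mulmxE. Qed.

Definition Eset m (X : 'M[R]_(size s)) := exists l : seq (R * seq G),
  all (fun c => all (fun g => g \in s) c.2 && (m <= size c.2)%N) l /\
  X = \sum_(c <- l) c.1 *: PiR c.2.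

Lemma E0 m : Eset m 0.
Proof. by exists [::]; rewrite big_nil. Qed.

Lemma ED m X Y : Eset m X -> Eset m Y -> Eset m (X + Y).
Proof.
move=> [l1 [h1 ->]] [l2 [h2 ->]]; exists (l1 ++ l2).
by rewrite all_cat h1 h2 big_cat.
Qed.

Lemma EZ m X r : Eset m X -> Eset m (r *: X).
Proof.
move=> [l [h ->]]; exists (map (fun c => (r * c.1, c.2)) l); split.
  by rewrite all_map.
by rewrite big_map scaler_sumr; apply: eq_bigr => c _; rewrite scalerA.
Qed.

Lemma Emono m m' X : (m' <= m)%N -> Eset m X -> Eset m' X.
Proof.
move=> le [l [h ->]]; exists l; split => //.
apply/allP => c cl; have /andP [-> /= le2] := allP h c cl.
exact: leq_trans le le2.
Qed.

Lemma EMscal m X r : Eset m X -> Eset m (X *m r%:M).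
Proof.
move=> [l [h ->]]; exists (map (fun c => (c.1 * r, c.2)) l); split.
  by rewrite all_map.
rewrite big_map mulmx_suml; apply: eq_bigr => c _.
by rewrite -scalemx1 scal_mul ?mulmx1 //; apply: PiR_cent.
Qed.

Lemma EscalM m X r : Eset m X -> Eset m (r%:M *m X).
Proof. by move=> h; rewrite mul_scalar_mx; apply: EZ. Qed.

Lemma EM m m' X Y : Eset m X -> Eset m' Y -> Eset (m + m') (X *m Y).
Proof.
move=> [l1 [h1 ->]] [l2 [h2 ->]].
exists [seq (c.1 * d.1, c.2 ++ d.2) | c <- l1, d <- l2]; split.
  apply/allP => e /allpairsP [[c d] [cl dl ->]] /=.
  have /andP [c1 c2] := allP h1 c cl; have /andP [d1 d2] := allP h2 d dl.
  by rewrite all_cat c1 d1 size_cat leq_add.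
rewrite big_allpairs_dep mulmx_suml; apply: eq_bigr => c _.
rewrite mulmx_sumr; apply: eq_bigr => d _.
by rewrite scal_mul ?PiR_cat //; apply: PiR_cent.
Qed.

Lemma Ezero X : Eset (size s * kp) X -> X = 0.
Proof.
move=> [l [h ->]]; rewrite big_seq big1 // => c cl.
by have /andP [c1 c2] := allP h c cl; rewrite PiR_zero ?scaler0.
Qed.

Lemma E_one : Eset 0 1.
Proof. by exists [:: (1, [::])]; rewrite big_seq1 /PiR big_nil scale1r. Qed.

Lemma Epow m X j : Eset m X -> Eset (m * j) (X ^+ j).
Proof.
move=> hX; elim: j => [|j IH]; first by rewrite muln0 expr0; exact: E_one.
by rewrite exprS mulnS -mulmxE; apply: EM.
Qed.

Lemma nil_of_E X (q : R) K : q ^+ K = 0 -> Eset 1 (X - q%:M) ->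
  X ^+ (K * (size s * kp)) = 0.
Proof.
move=> qK hD.
have key : forall j, Eset 1 (X ^+ j - (q ^+ j)%:M).
  elim=> [|j IH]; first by rewrite expr0 subrr; apply: E0.
  have -> : X ^+ j.+1 - (q ^+ j.+1)%:M =
     (q%:M + (X - q%:M)) *m (X ^+ j - (q ^+ j)%:M) + (X - q%:M) *m (q ^+ j)%:M.
    rewrite [q%:M + _]addrC subrK mulmxBr mulmxBl -scalar_mxM !mulmxE -!exprS.
    by rewrite addrA subrK.
  apply: ED; last exact: EMscal.
  rewrite mulmxDl; apply: ED; first exact: EscalM.
  by apply: (Emono (m := 1 + 1)) => //; apply: EM.
have := key K; rewrite qK (raddf0 (@scalar_mx R (size s))) subr0 => hXK.
rewrite exprM; apply: Ezero.
by have := Epow (size s * kp) hXK; rewrite mul1n.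
Qed.


Definition rho (a : grp R G) : 'M[R]_(size s) := \sum_(u <- a) u.1 *: perm_mx (pi u.2).
Definition supp (a : grp R G) := all (fun u => u.2 \in s) a.
Definition eps (a : grp R G) := \sum_(u <- a) u.1.

Lemma supp_add a b : supp a -> supp b -> supp (gr_add a b).
Proof. by rewrite /supp /gr_add all_cat => -> ->. Qed.
Lemma supp_opp a : supp a -> supp (gr_opp a).
Proof. by rewrite /supp /gr_opp all_map. Qed.
Lemma supp_mul a b : supp a -> supp b -> supp (gr_mul a b).
Proof.
move=> ha hb; apply/allP => e /allpairsP [[u v] [ua vb ->]] /=.
by apply: smul; [apply: (allP ha) | apply: (allP hb)].
Qed.
Lemma supp_one : supp (gr_one R G).
Proof. by rewrite /supp /= s1. Qed.
Lemma supp_exp a m : supp a -> supp (gr_exp a m).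
Proof. by move=> ha; elim: m => [|m IH] /=; [exact: supp_one | exact: supp_mul]. Qed.

Lemma rho_add a b : rho (gr_add a b) = rho a + rho b.
Proof. by rewrite /rho /gr_add big_cat. Qed.
Lemma rho_opp a : rho (gr_opp a) = - rho a.
Proof.
rewrite /rho /gr_opp big_map -sumrN; apply: eq_bigr => u _; by rewrite scaleNr.
Qed.
Lemma rho_one : rho (gr_one R G) = 1.
Proof. by rewrite /rho big_seq1 /= pi_one perm_mx1 scale1r. Qed.
Lemma rho_scal (v : R) : rho [:: (v, monoid.one)] = v%:M.
Proof. by rewrite /rho big_seq1 /= pi_one perm_mx1 scalemx1. Qed.
Lemma rho_mul a b : supp a -> supp b -> rho (gr_mul a b) = rho a * rho b.
Proof.
move=> ha hb; rewrite /rho /gr_mul big_allpairs_dep -mulmxE mulmx_suml.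
rewrite big_seq [RHS]big_seq; apply: eq_bigr => u ua.
rewrite mulmx_sumr big_seq [RHS]big_seq; apply: eq_bigr => v vb.
rewrite scal_mul; last exact: perm_cent.
by rewrite -perm_mxM -pi_mul //; [apply: (allP ha) | apply: (allP hb)].
Qed.
Lemma rho_exp a m : supp a -> rho (gr_exp a m) = rho a ^+ m.
Proof.
move=> ha; elim: m => [|m IH] /=; first by rewrite rho_one expr0.
by rewrite rho_mul ?supp_exp // IH exprS.
Qed.

Lemma eps_rho a : supp a -> Eset 1 (rho a - (eps a)%:M).
Proof.
move=> ha; exists (map (fun u => (u.1, [:: u.2])) a); split.
  by rewrite all_map; apply/allP => u ua /=; rewrite (allP ha).
rewrite big_map /rho /eps -scalemx1 scaler_suml -sumrB; apply: eq_bigr => u _.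
by rewrite /PiR big_seq1 scalerBr.
Qed.

Lemma coef_out a x : supp a -> x \notin s -> gr_coef a x = 0.
Proof.
move=> ha xs; rewrite /gr_coef big_seq_cond big1 // => u /andP [ua /eqP ux].
by move: xs; rewrite -ux (allP ha).
Qed.

Lemma coef_rho x : x \in s -> exists i j, forall a, supp a -> gr_coef a x = rho a i j.
Proof.
move=> xs.
have i0lt : (index monoid.one s < size s)%N by rewrite index_mem.
have jlt : (index x s < size s)%N by rewrite index_mem.
exists (Ordinal i0lt), (Ordinal jlt) => a ha.
rewrite /gr_coef /rho summxE big_mkcond big_seq [RHS]big_seq; apply: eq_bigr => u ua.
have us2 : u.2 \in s by apply: (allP ha).
rewrite !mxE piE //.
have -> : (mu u.2 (Ordinal i0lt) == Ordinal jlt) = (u.2 == x).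
  apply/eqP/eqP => [/(congr1 val) /=|->]; last first.
    by apply: val_inj; rewrite mu_val //= nth_index // monoid.mul1g.
  rewrite mu_val //= nth_index // monoid.mul1g => /(congr1 (nth monoid.one s)).
  by rewrite !nth_index.
by case: eqP => _; rewrite ?mulr1 ?mulr0.
Qed.

Lemma rho_eq a b : supp a -> supp b -> rho a = rho b -> gr_eq a b.
Proof.
move=> ha hb e x; case: (boolP (x \in s)) => xs; last by rewrite !coef_out.
by have [i [j h]] := coef_rho xs; rewrite !h // e.
Qed.

Lemma nil_list a : supp a -> is_nil_r (eps a) -> gr_nil a.
Proof.
move=> ha [K qK]; exists (K * (size s * kp))%N.
apply: rho_eq; [exact: supp_exp | by [] |].
by rewrite rho_exp // (nil_of_E qK (eps_rho ha)) /rho big_nil.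
Qed.


Lemma eps_mul_scal (v : R) a : eps (gr_mul [:: (v, monoid.one)] a) = v * eps a.
Proof. by rewrite /eps /gr_mul big_allpairs_dep big_seq1 mulr_sumr. Qed.

Lemma eps_sub a b : eps (gr_sub a b) = eps a - eps b.
Proof. by rewrite /eps /gr_sub /gr_add /gr_opp big_cat big_map sumrN. Qed.

Lemma unit_list a : supp a -> is_unit_r (eps a) -> gr_unit a.
Proof.
move=> ha [v [uv vu]].
set y := gr_mul [:: (v, monoid.one)] a.
have hv : supp [:: (v, monoid.one)] by rewrite /supp /= s1.
have hy : supp y by apply: supp_mul.
set x := gr_sub y (gr_one R G).
have hx : supp x by apply: supp_add => //; apply: supp_opp; apply: supp_one.
have ex : eps x = 0 by rewrite eps_sub eps_mul_scal vu /eps big_seq1 subrr.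
have [N XN] : exists N, rho x ^+ N = 0.
  exists (1 * (size s * kp))%N; apply: (nil_of_E (q := 0)); first by rewrite expr1.
  by rewrite -ex; apply: eps_rho.
set z := foldr (@gr_add R G) (gr_zero R G) [seq gr_exp (gr_opp x) i | i <- iota 0 N].
have hz : supp z.
  rewrite /z; elim: (iota 0 N) => [|i l IH] //=.
  by apply: supp_add => //; apply: supp_exp; apply: supp_opp.
set Z := \sum_(i < N) (- rho x) ^+ i.
have rz : rho z = Z.
  rewrite /z /Z -(big_mkord xpredT (fun i => (- rho x) ^+ i)) /index_iota subn0.
  elim: (iota 0 N) => [|i l IH] /=; first by rewrite big_nil /rho big_nil.
  by rewrite rho_add IH big_cons rho_exp ?rho_opp //; apply: supp_opp.
have ry : rho y = 1 + rho x by rewrite /x /gr_sub rho_add rho_opp rho_one addrC subrK.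
have ryv : rho y = v%:M * rho a by rewrite /y rho_mul // rho_scal.
have Zr : (1 + rho x) * Z = 1.
  have := subrX1 (- rho x) N; rewrite exprNn XN mulr0 sub0r => h.
  have -> : 1 + rho x = - (- rho x - 1) by rewrite opprB opprK.
  by rewrite mulNr -h opprK.
have rZ : Z * (1 + rho x) = 1.
  have c : GRing.comm (1 + rho x) Z.
    apply: commr_sum => i _; apply: commrX; apply: commrN.
    by apply/commr_sym/commrD; [exact: commr1 | exact: commr_refl].
  by rewrite -c.
set b := gr_mul z [:: (v, monoid.one)].
have hb : supp b by apply: supp_mul.
have ra : rho a = (eps a)%:M * rho y.
  by rewrite ryv mulrA -mulmxE -scalar_mxM uv mul1mx.
exists b; split; apply: rho_eq; try exact: supp_mul; try exact: supp_one.
  rewrite rho_mul // /b rho_mul // rho_scal rz rho_one ra ry.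
  by rewrite -mulrA (mulrA (1 + rho x)) Zr mul1r -mulmxE -scalar_mxM uv.
rewrite rho_mul // /b rho_mul // rho_scal rz rho_one.
by rewrite -mulrA -ryv ry rZ.
Qed.

End RLevel.
End Perm.

Lemma decP (P : Prop) : {b : bool | b = true <-> P}.
Proof.
apply: constructive_indefinite_description.
by case: (classic P) => h; [exists true | exists false]; split.
Qed.

Theorem lemma3p2 (p : nat) (R : pzRingType) (G : groupType)
  (hp : prime p) (hR : GWNC R) (hpnil : is_nil_r (p%:R : R))
  (hGp : is_p_group p G) (hGlf : locally_finite G) :
  GWNC_group_ring R G.
Proof.
move=> a nu.
set l := map snd a.
have [t ht] := hGlf l.
pose dec x := sval (decP (gen_by l x)).
set s := undup (filter dec t).
have ms : forall x, x \in s <-> gen_by l x.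
  move=> x; rewrite mem_undup mem_filter /dec.
  case: (decP (gen_by l x)) => b /= hb; split.
    by case/andP => /hb.
  by move=> h; rewrite (proj2 hb h) ht.
have us : uniq s by apply: undup_uniq.
have s1 : monoid.one \in s by apply/ms; apply: gen_one.
have smul : forall x y, x \in s -> y \in s -> monoid.mul x y \in s.
  by move=> x y /ms hx /ms hy; apply/ms; apply: gen_mul.
have hpow : forall g, g \in s -> exists k, natexp g (p ^ k) = monoid.one.
  by move=> g _; have [k [_ [h _]]] := hGp g; exists k.
have ha : supp s a.
  by apply/allP => u ua; apply/ms; apply: gen_in; rewrite /l; apply: map_f.
have [kp hk] := hpnil.
have nue : ~ is_unit_r (eps a).
  by move=> hu; apply: nu; apply: (unit_list us s1 smul hp hpow hk ha hu).
have [q0 [f0 [hq [hf he]]]] := hR _ nue.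
pose e : grp R G := [:: (f0, monoid.one)].
have hse : supp s e by rewrite /supp /= s1.
have idem : gr_idem e.
  by move=> x; rewrite /gr_mul /= monoid.mulg1 hf.
case: he => he.
- exists (gr_sub a e), e; split; [|split => //].
    apply: (nil_list us s1 smul hp hpow hk).
      by apply: supp_add => //; apply: supp_opp.
    by rewrite eps_sub he /eps big_seq1 /= addrK.
  left => x; rewrite /gr_coef /gr_add /gr_sub /gr_add /gr_opp !big_cat /= !big_cons !big_nil.
  by case: eqP => _; rewrite ?addr0 ?subrK.
- exists (gr_add a e), e; split; [|split => //].
    apply: (nil_list us s1 smul hp hpow hk).
      by apply: supp_add.
    by rewrite /eps /gr_add big_cat -/(eps a) he big_seq1 /= subrK.
  right => x; rewrite /gr_coef /gr_add /gr_sub /gr_add /gr_opp !big_cat /= !big_cons !big_nil.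
  by case: eqP => _; rewrite ?addr0 ?addrK.
Qed.
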